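(* Let $S$ be a category and $x,y\in S$. Then $\varepsilon_S(x)=\varepsilon_S(y)$ in $\mathrm{U_{mon}}(S)$ if and only if either $x=y$ or both $x$ and $y$ are identities of $S$. In particular, the restriction of $\varepsilon_S$ to every hom-set $S(a,b)$ is one-to-one.
   Context: Categories are arrow-only: a set $S$ with partial associative multiplication, identities $\mathrm{Id}\,S$, source/target identities $\mathrm{s}(x),\mathrm{t}(x)$; $S(a,b)=\{x:\mathrm{s}(x)=a,\mathrm{t}(x)=b\}$. $\mathrm{U_{mon}}(S)$ is the monoid presented by generators $\varepsilon_S(x)$ ($x\in S$) and relations $\varepsilon_S(e)=1$ ($e\in\mathrm{Id}\,S$), $\varepsilon_S(x)\varepsilon_S(y)=\varepsilon_S(xy)$ whenever $xy$ is defined. *)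

(* Defs.v *)
From Stdlib Require Import List.
Import ListNotations.



(* An arrow-only category: a set of arrows with source/target identity maps
   and a partial (associative) multiplication; x*y is defined iff t(x) = s(y)
   (diagrammatic order, x : s(x) -> t(x)). *)
Record Cat := {
  arr :> Type;
  src : arr -> arr;
  tgt : arr -> arr;
  comp : arr -> arr -> option arr;
  comp_defined : forall x y, (exists z, comp x y = Some z) <-> tgt x = src y;
  src_src : forall x, src (src x) = src x;
  tgt_src : forall x, tgt (src x) = src x;
  src_tgt : forall x, src (tgt x) = tgt x;
  tgt_tgt : forall x, tgt (tgt x) = tgt x;
  comp_src_l : forall x, comp (src x) x = Some x;
  comp_tgt_r : forall x, comp x (tgt x) = Some x;
  src_comp : forall x y z, comp x y = Some z -> src z = src x;
  tgt_comp : forall x y z, comp x y = Some z -> tgt z = tgt y;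
  comp_assoc : forall x y z xy yz, comp x y = Some xy -> comp y z = Some yz ->
                 comp xy z = comp x yz
}.

Definition is_id (S : Cat) (e : S) : Prop := src S e = e /\ tgt S e = e.

Definition hom (S : Cat) (a b : S) (x : S) : Prop := src S x = a /\ tgt S x = b.

(* U_mon(S) is the free monoid on the arrows (words = lists) modulo the
   congruence generated by  eps(e) = 1 (e identity)  and
   eps(x) eps(y) = eps(xy) (xy defined). *)
Inductive umon_eq (S : Cat) : list (arr S) -> list (arr S) -> Prop :=
| ue_id : forall e : arr S, is_id S e -> umon_eq S [e] []
| ue_comp : forall x y z : arr S, comp S x y = Some z -> umon_eq S [x; y] [z]
| ue_refl : forall w, umon_eq S w w
| ue_sym : forall w1 w2, umon_eq S w1 w2 -> umon_eq S w2 w1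
| ue_trans : forall w1 w2 w3, umon_eq S w1 w2 -> umon_eq S w2 w3 -> umon_eq S w1 w3
| ue_cat : forall u1 u2 v1 v2, umon_eq S u1 u2 -> umon_eq S v1 v2 ->
             umon_eq S (u1 ++ v1) (u2 ++ v2).

Definition eps_eq (S : Cat) (x y : S) : Prop := umon_eq S [x] [y].

(* Main.v *)
Require Import Defs.
From Stdlib Require Import List ClassicalDescription.
Import ListNotations.

Section U.
Variable S : Cat.

Lemma defd (x y : arr S) : tgt S x = src S y -> exists z, comp S x y = Some z.
Proof. intro H. apply (comp_defined S). exact H. Qed.

Lemma tgtsrc (x y z : arr S) : comp S x y = Some z -> tgt S x = src S y.
Proof. intro H. apply (comp_defined S). eauto. Qed.

Lemma id_left (x y z : arr S) : is_id S x -> comp S x y = Some z -> z = y.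
Proof.
  intros [H1 H2] H. pose proof (tgtsrc _ _ _ H) as E. rewrite H2 in E. subst x.
  rewrite comp_src_l in H. congruence.
Qed.

Lemma id_right (x y z : arr S) : is_id S y -> comp S x y = Some z -> z = x.
Proof.
  intros [H1 H2] H. pose proof (tgtsrc _ _ _ H) as E. rewrite H1 in E. rewrite <- E in H.
  rewrite comp_tgt_r in H. congruence.
Qed.

Definition idb (x : arr S) : bool := if excluded_middle_informative (is_id S x) then true else false.

Lemma idb_true x : idb x = true <-> is_id S x.
Proof. unfold idb. destruct (excluded_middle_informative (is_id S x)); split; intros; try tauto; congruence. Qed.
Lemma idb_false x : idb x = false <-> ~ is_id S x.
Proof. unfold idb. destruct (excluded_middle_informative (is_id S x)); split; intros; try tauto; congruence. Qed.

Definition act (x : arr S) (s : list (arr S)) : list (arr S) :=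
  if idb x then s else
  match s with
  | [] => [x]
  | w :: r => match comp S w x with
              | Some v => if idb v then r else v :: r
              | None => x :: w :: r
              end
  end.

Fixpoint red (s : list (arr S)) : Prop :=
  match s with
  | [] => True
  | w :: r => ~ is_id S w /\ match r with [] => True | u :: _ => comp S u w = None end /\ red r
  end.

Lemma none_iff (x y : arr S) : comp S x y = None <-> tgt S x <> src S y.
Proof.
  split.
  - intros H E. destruct (defd _ _ E) as [z Hz]. congruence.
  - intros H. destruct (comp S x y) eqn:E; auto. exfalso. apply H. eapply tgtsrc; eauto.
Qed.

Lemma act_red x s : red s -> red (act x s).
Proof.
  intros Hs. unfold act. destruct (idb x) eqn:Ex; auto.
  apply idb_false in Ex.
  destruct s as [|w r]; simpl. { tauto. }
  destruct (comp S w x) as [v|] eqn:Ew.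
  - destruct (idb v) eqn:Ev. { simpl in Hs; tauto. }
    apply idb_false in Ev. simpl. simpl in Hs. destruct Hs as [Hw [Hr Hrr]].
    split; auto. split; auto. destruct r as [|u r']; auto.
    apply none_iff. apply none_iff in Hr. rewrite (src_comp S _ _ _ Ew). exact Hr.
  - simpl. tauto.
Qed.

Lemma act_comp x y z s : red s -> comp S x y = Some z -> act y (act x s) = act z s.
Proof.
  intros Hs H.
  destruct (idb x) eqn:Ex.
  { apply idb_true in Ex. pose proof (id_left _ _ _ Ex H). subst z.
    unfold act at 2. rewrite (proj2 (idb_true x) Ex). reflexivity. }
  destruct (idb y) eqn:Ey.
  { apply idb_true in Ey. pose proof (id_right _ _ _ Ey H). subst z.
    unfold act at 1. rewrite (proj2 (idb_true y) Ey). reflexivity. }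
  apply idb_false in Ex. apply idb_false in Ey.
  assert (Hx : idb x = false) by (apply idb_false; auto).
  assert (Hy : idb y = false) by (apply idb_false; auto).
  destruct (idb z) eqn:Ez.
  - apply idb_true in Ez.
    assert (Hz : idb z = true) by (apply idb_true; auto).
    unfold act at 3. rewrite Hz.
    destruct s as [|w r].
    + unfold act. rewrite Hx, Hy, H, Hz. reflexivity.
    + unfold act at 2. rewrite Hx.
      destruct (comp S w x) as [v|] eqn:Ew.
      * pose proof (comp_assoc S _ _ _ _ _ Ew H) as A.
        assert (Ewz : comp S w z = Some w).
        { pose proof (tgtsrc _ _ _ H) as E1.
          pose proof (src_comp S _ _ _ H) as E2. destruct Ez as [Ez1 Ez2].
          pose proof (tgtsrc _ _ _ Ew) as E3.
          assert (z = tgt S w) by congruence. subst z. apply comp_tgt_r. }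
        rewrite Ewz in A.
        destruct (idb v) eqn:Ev.
        -- apply idb_true in Ev. pose proof (id_left _ _ _ Ev A). subst w.
           simpl in Hs. destruct Hs as [_ [Hr _]].
           unfold act. rewrite Hy. destruct r as [|u r']; auto.
           rewrite Hr. reflexivity.
        -- unfold act. rewrite Hy, A.
           simpl in Hs. destruct Hs as [Hw _].
           assert (idb w = false) by (apply idb_false; auto). rewrite H0. reflexivity.
      * unfold act. rewrite Hy, H, Hz. reflexivity.
  - apply idb_false in Ez.
    assert (Hz : idb z = false) by (apply idb_false; auto).
    destruct s as [|w r].
    + unfold act. rewrite Hx, Hy, Hz, H, Hz. reflexivity.
    + unfold act at 2. rewrite Hx.
      destruct (comp S w x) as [v|] eqn:Ew.
      * pose proof (comp_assoc S _ _ _ _ _ Ew H) as A.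
        destruct (idb v) eqn:Ev.
        -- apply idb_true in Ev. pose proof (tgtsrc _ _ _ H) as E1.
           pose proof (tgt_comp S _ _ _ Ew) as E2.
           destruct (defd v y) as [u Hu]; [congruence|].
           pose proof (id_left _ _ _ Ev Hu). subst u. rewrite Hu in A.
           unfold act. rewrite Hy, Hz, <- A, Hy.
           simpl in Hs. destruct Hs as [_ [Hr _]].
           destruct r as [|u r']; auto.
           replace (comp S u y) with (@None (arr S)); auto.
           symmetry. apply none_iff. apply none_iff in Hr.
           destruct Ev as [Ev1 Ev2]. rewrite (src_comp S _ _ _ Ew) in Ev1.
           intro C. apply Hr. rewrite C, <- E1, <- E2. congruence.
        -- unfold act. rewrite Hy, Hz.
           pose proof (tgtsrc _ _ _ H) as E1.
           pose proof (tgt_comp S _ _ _ Ew) as E2.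
           destruct (defd v y) as [u Hu]; [congruence|].
           rewrite Hu. rewrite Hu in A. rewrite <- A. reflexivity.
      * unfold act. rewrite Hy, H, Hz.
        replace (comp S w z) with (@None (arr S)); auto.
        symmetry. apply none_iff. apply none_iff in Ew.
        rewrite (src_comp S _ _ _ H). exact Ew.
Qed.

Definition run (w : list (arr S)) (s : list (arr S)) := fold_left (fun s x => act x s) w s.

Lemma run_red w s : red s -> red (run w s).
Proof. revert s; induction w; simpl; auto. intros s Hs. apply IHw, act_red, Hs. Qed.

Lemma run_inv w1 w2 : umon_eq S w1 w2 -> forall s, red s -> run w1 s = run w2 s.
Proof.
  induction 1; intros s Hs.
  - simpl. unfold act. rewrite (proj2 (idb_true e) H). reflexivity.
  - simpl. apply act_comp; auto.
  - reflexivity.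
  - symmetry; auto.
  - rewrite IHumon_eq1; auto.
  - unfold run. rewrite !fold_left_app. fold (run u1 s) (run u2 s).
    rewrite IHumon_eq1; auto. apply IHumon_eq2. apply run_red; auto.
Qed.

End U.

Theorem lemma3p10 (S : Cat) :
  (forall x y : arr S, eps_eq S x y <-> (x = y \/ (is_id S x /\ is_id S y))) /\
  (forall a b x y : arr S, hom S a b x -> hom S a b y -> eps_eq S x y -> x = y).
Proof.
  assert (K : forall x y : arr S, eps_eq S x y -> (x = y \/ (is_id S x /\ is_id S y))).
  { intros x y H. pose proof (run_inv S _ _ H [] I) as R. simpl in R. unfold act in R.
    destruct (idb S x) eqn:Ex, (idb S y) eqn:Ey.
    - right. split; apply idb_true; auto.
    - discriminate.
    - discriminate.
    - left. congruence. }
  split.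
  - intros x y. split; auto. intros [<-|[Hx Hy]].
    + apply ue_refl.
    + unfold eps_eq. eapply ue_trans. apply ue_id; auto. apply ue_sym, ue_id; auto.
  - intros a b x y [Hx1 Hx2] [Hy1 Hy2] H. destruct (K _ _ H) as [|[[X1 _] [Y1 _]]]; auto.
    congruence.
Qed.
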